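(* In the nondeterministic Outcome Logic instance, for every program $C$ and atomic assertions $P,Q$: \[ \vDash\{\!|P|\!\}\,C\,\{\!|Q|\!\}\quad\text{iff}\quad\vDash\langle P\rangle\,C\,\langle Q\oplus\top\rangle, \] where $\vDash\{\!|P|\!\}C\{\!|Q|\!\}$ means: for every $\sigma\in\Sigma$ with $\sigma\vDash_\Sigma P$ there exists $\tau\in[\![C]\!](\sigma)$ with $\tau\vDash_\Sigma Q$.
   Context: Nondeterministic instance: powerset monad ($\mathsf{bind}(S,k)=\bigcup_{x\in S}k(x)$, $\mathsf{unit}(x)=\{x\}$, monoid $(\cup,\emptyset)$); a program $C$ has semantics $[\![C]\!]\colon\Sigma\to2^\Sigma$ (built from $\mathbb{0},\mathbb{1},;,+,{}^\star$ and atomic commands as usual) and $[\![C]\!]^\dagger(S)=\bigcup_{\sigma\in S}[\![C]\!](\sigma)$. Atomic assertions carry a state relation $\vDash_\Sigma$; a set $S$ satisfies atomic $P$ iff $S\neq\emptyset$ and every $\sigma\in S$ satisfies $P$. $S\vDash\top$ always; $S\vDash\varphi\oplus\psi$ iff $S=S_1\cup S_2$ with $S_1\vDash\varphi$, $S_2\vDash\psi$. $\vDash\langle\varphi\rangle C\langle\psi\rangle$ iff every $S\subseteq\Sigma$ with $S\vDash\varphi$ has $[\![C]\!]^\dagger(S)\vDash\psi$. *)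

(* Defs.v *)
Set Implicit Arguments.

Definition pset (S : Type) := S -> Prop.

Inductive cmd (Act : Type) : Type :=
| CZero : cmd Act
| COne : cmd Act
| CSeq : cmd Act -> cmd Act -> cmd Act
| CPlus : cmd Act -> cmd Act -> cmd Act
| CStar : cmd Act -> cmd Act
| CAtom : Act -> cmd Act.

Definition unit_set {S : Type} (x : S) : pset S := fun y => y = x.
Definition bind_set {S T : Type} (A : pset S) (k : S -> pset T) : pset T :=
  fun y => exists x, A x /\ k x y.

(* C^n = C ; ... ; C  (n times), with C^0 = 1, used for the Kleene star:
   [[C^*]](s) = \bigcup_n [[C]]^n(s)  (the least fixpoint of
   k |-> unit \cup bind([[C]], k)). *)
Fixpoint iter_sem {S : Type} (f : S -> pset S) (n : nat) : S -> pset S :=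
  match n with
  | O => fun s => unit_set s
  | Datatypes.S m => fun s => bind_set (f s) (iter_sem f m)
  end.

Fixpoint sem {Act S : Type} (act : Act -> S -> pset S) (C : cmd Act)
  : S -> pset S :=
  match C with
  | @CZero _ => fun _ _ => False
  | @COne _ => fun s => unit_set s
  | CSeq C1 C2 => fun s => bind_set (sem act C1 s) (sem act C2)
  | CPlus C1 C2 => fun s t => sem act C1 s t \/ sem act C2 s t
  | CStar C1 => fun s t => exists n, iter_sem (sem act C1) n s t
  | @CAtom _ a => act a
  end.

Definition sem_dagger {Act S : Type} (act : Act -> S -> pset S) (C : cmd Act)
  (X : pset S) : pset S := bind_set X (sem act C).

Inductive assn (S : Type) : Type :=
| AAtom : (S -> Prop) -> assn S
| ATop : assn S
| AOplus : assn S -> assn S -> assn S.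

Fixpoint asat {S : Type} (X : pset S) (phi : assn S) : Prop :=
  match phi with
  | AAtom P => (exists s, X s) /\ (forall s, X s -> P s)
  | @ATop _ => True
  | AOplus phi1 phi2 =>
      exists X1 X2 : pset S,
        (forall s, X s <-> X1 s \/ X2 s) /\ asat X1 phi1 /\ asat X2 phi2
  end.

Definition ol_valid {Act S : Type} (act : Act -> S -> pset S)
  (phi : assn S) (C : cmd Act) (psi : assn S) : Prop :=
  forall X : pset S, asat X phi -> asat (sem_dagger act C X) psi.

Definition lower_valid {Act S : Type} (act : Act -> S -> pset S)
  (P : S -> Prop) (C : cmd Act) (Q : S -> Prop) : Prop :=
  forall s, P s -> exists t, sem act C s t /\ Q t.

(* Main.v *)
Require Import Defs.

Theorem theoremC1 (Act Sigma : Type) (act : Act -> Sigma -> pset Sigma)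
  (C : cmd Act) (P Q : Sigma -> Prop) :
  lower_valid act P C Q <->
  ol_valid act (AAtom P) C (AOplus (AAtom Q) (ATop Sigma)).
Proof.
  unfold lower_valid, ol_valid; simpl; split.
  - intros H X [[s0 Hs0] HP].
    exists (fun t => sem_dagger act C X t /\ Q t), (sem_dagger act C X).
    split; [|split; [split|exact I]].
    + intros t; split; [intros; right; assumption|intros [[? ?]|?]; assumption].
    + destruct (H s0 (HP s0 Hs0)) as [t [Ht HQ]].
      exists t; split; [exists s0; split; assumption|assumption].
    + intros t [_ HQ]; exact HQ.
  - intros H s Ps.
    destruct (H (unit_set s)) as [X1 [X2 [Heq [[[t Ht] HQ] _]]]].
    + split; [exists s; reflexivity|intros s' ->; exact Ps].
    + exists t. split; [|apply HQ; exact Ht].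
      destruct (proj2 (Heq t) (or_introl Ht)) as [x [Hx Hs]].
      unfold unit_set in Hx; subst x; exact Hs.
Qed.
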